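(* The smallest constant $\sigma_{2,0}$ such that $\|f-P_2(f)\|_{C^0}\le\sigma_{2,0}\|f'\|_{C^0}$ for all $f\in C^1([-1,1],\mathbb{C})$ equals $$\frac{14\sqrt7-20}{27}\ (\approx0.6311).$$ Equivalently, with the notation below, $\max_{t\in[-1,1],y\in\Omega_2}\max\big(\overline{\varphi}_2(y)(t)-P_2(y)(t),\,P_2(y)(t)-\underline{\varphi}_2(y)(t)\big)=\frac{14\sqrt7-20}{27}$.
   Context: $P_2$ maps a continuous function on $[-1,1]$ to its polynomial interpolant of degree $\le2$ at the Chebyshev points $t_0=1,t_1=0,t_2=-1$; for $y\in\mathbb{R}^3$, $P_2(y)$ is the polynomial of degree $\le2$ with $P_2(y)(t_k)=y_k$. $\|\cdot\|_{C^0}$ is the sup norm on $[-1,1]$. $\Omega_2=\{y\in\mathbb{R}^3:|y_k|\le|t_k|,\ |y_{k+1}-y_k|\le|t_{k+1}-t_k|\}$. For $y\in\Omega_2$ and $t$ between $t_{k^*}$ and $t_{k^*+1}$: $\overline{\varphi}_2(y)(t)=\min\{y_{k^*}+t-t_{k^*},\,y_{k^*+1}-t+t_{k^*+1},\,|t|\}$ and $\underline{\varphi}_2(y)(t)=\max\{y_{k^*}-t+t_{k^*},\,y_{k^*+1}+t-t_{k^*+1},\,-|t|\}$. *)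

(* Defs.v *)
From Stdlib Require Import Reals.
From Coquelicot Require Import Coquelicot.
Open Scope R_scope.

Definition I11 (t : R) : Prop := -1 <= t <= 1.

Definition supnormC (g : R -> C) : R :=
  real (Lub_Rbar (fun r => exists t, I11 t /\ r = Cmod (g t))).

Definition is_deriv_on_I11 (g g' : R -> C) : Prop :=
  forall t, I11 t ->
    filterlim (fun s => ((g s - g t) / RtoC (s - t))%C)
      (within (fun s => I11 s /\ s <> t) (locally t)) (locally (g' t)).

Definition continuous_on_I11 (g : R -> C) : Prop :=
  forall t, I11 t -> filterlim g (within I11 (locally t)) (locally (g t)).

(* Chebyshev points t_0 = 1, t_1 = 0, t_2 = -1 and the Lagrange
   interpolant of degree <= 2 through values y0, y1, y2 at them. *)
Definition P2vals (y0 y1 y2 : C) (t : R) : C :=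
  (RtoC (t * (t + 1) / 2) * y0 + RtoC (1 - t * t) * y1
   + RtoC (t * (t - 1) / 2) * y2)%C.

Definition P2 (f : R -> C) : R -> C := P2vals (f 1) (f 0) (f (-1)).

Definition admissible_sigma (sigma : R) : Prop :=
  forall f f' : R -> C, is_deriv_on_I11 f f' -> continuous_on_I11 f' ->
    supnormC (fun t => (f t - P2 f t)%C) <= sigma * supnormC f'.

Definition P2r (y0 y1 y2 : R) (t : R) : R :=
  t * (t + 1) / 2 * y0 + (1 - t * t) * y1 + t * (t - 1) / 2 * y2.

(* Omega_2 = { y : |y_k| <= |t_k|, |y_{k+1} - y_k| <= |t_{k+1} - t_k| }. *)
Definition Omega2 (y0 y1 y2 : R) : Prop :=
  Rabs y0 <= Rabs 1 /\ Rabs y1 <= Rabs 0 /\ Rabs y2 <= Rabs (-1) /\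
  Rabs (y1 - y0) <= Rabs (0 - 1) /\ Rabs (y2 - y1) <= Rabs (-1 - 0).

(* For t between t_{k} and t_{k+1} (k = 0 for t in [0,1], k = 1 for
   t in [-1,0]):  upper envelope min{y_k + |t - t_k|, y_{k+1} + |t - t_{k+1}|, |t|}
   and lower envelope max{y_k - |t - t_k|, y_{k+1} - |t - t_{k+1}|, -|t|}. *)
Definition phi_up (y0 y1 y2 t : R) : R :=
  if Rle_dec 0 t then Rmin (Rmin (y0 + Rabs (t - 1)) (y1 + Rabs (t - 0))) (Rabs t)
  else Rmin (Rmin (y1 + Rabs (t - 0)) (y2 + Rabs (t - -1))) (Rabs t).

Definition phi_low (y0 y1 y2 t : R) : R :=
  if Rle_dec 0 t then Rmax (Rmax (y0 - Rabs (t - 1)) (y1 - Rabs (t - 0))) (- Rabs t)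
  else Rmax (Rmax (y1 - Rabs (t - 0)) (y2 - Rabs (t - -1))) (- Rabs t).

Definition gap2 (y0 y1 y2 t : R) : R :=
  Rmax (phi_up y0 y1 y2 t - P2r y0 y1 y2 t) (P2r y0 y1 y2 t - phi_low y0 y1 y2 t).

(* Main.v *)
From Stdlib Require Import Reals Lra Psatz.
From Coquelicot Require Import Coquelicot.
Require Import Defs.
Open Scope R_scope.

Lemma Cquot_fst (a b : C) r : r <> 0 -> fst ((a - b) / RtoC r)%C = (fst a - fst b) / r.
Proof. intros H. destruct a, b. unfold Cdiv, Cinv, Cminus, Cplus, Copp, Cmult, RtoC. simpl. field. auto. Qed.
Lemma Cquot_snd (a b : C) r : r <> 0 -> snd ((a - b) / RtoC r)%C = (snd a - snd b) / r.
Proof. intros H. destruct a, b. unfold Cdiv, Cinv, Cminus, Cplus, Copp, Cmult, RtoC. simpl. field. auto. Qed.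

Lemma within_C_eps (g : R -> C) (D : R -> Prop) t L :
  filterlim g (within D (locally t)) (locally L) ->
  forall eps, 0 < eps -> exists delta, 0 < delta /\ forall s, D s -> Rabs (s - t) < delta ->
   Rabs (fst (g s) - fst L) < eps /\ Rabs (snd (g s) - snd L) < eps.
Proof.
  intros H eps Heps.
  destruct (proj1 (filterlim_locally g L) H (mkposreal eps Heps)) as [d Hd].
  exists d. split. apply cond_pos. intros s Ds Hs.
  specialize (Hd s Hs Ds). destruct Hd as [H1 H2]. split; [exact H1| exact H2].
Qed.

Lemma C_eps_within (g : R -> C) (D : R -> Prop) t L :
  (forall eps, 0 < eps -> exists delta, 0 < delta /\ forall s, D s -> Rabs (s - t) < delta ->
   Rabs (fst (g s) - fst L) < eps /\ Rabs (snd (g s) - snd L) < eps) ->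
  filterlim g (within D (locally t)) (locally L).
Proof.
  intros H. apply filterlim_locally. intros [eps Heps].
  destruct (H eps Heps) as [d [Hd Hd2]].
  exists (mkposreal d Hd). intros s Hs Ds. split; apply (Hd2 s Ds Hs).
Qed.

Lemma real_C1 (F F' : R -> R) : (forall x, is_derive F x (F' x)) -> (forall x, continuity_pt F' x) ->
  is_deriv_on_I11 (fun x => RtoC (F x)) (fun x => RtoC (F' x)) /\
  continuous_on_I11 (fun x => RtoC (F' x)).
Proof.
  intros HD HC. split.
  - intros t _. apply C_eps_within. intros eps Heps.
    pose proof (proj1 (is_derive_Reals F t (F' t)) (HD t)) as Hl.
    destruct (Hl eps Heps) as [d Hd].
    exists d. split. apply cond_pos. intros s [_ Hst] Hs.
    assert (Hne : s - t <> 0) by lra.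
    rewrite Cquot_fst, Cquot_snd by exact Hne. simpl.
    split.
    + specialize (Hd (s - t) Hne Hs). replace (t + (s - t)) with s in Hd by ring. exact Hd.
    + replace ((0 - 0) / (s - t) - 0) with 0 by (field; auto). rewrite Rabs_R0. exact Heps.
  - intros t _. apply C_eps_within. intros eps Heps.
    destruct (HC t eps Heps) as [d [Hd Hd2]].
    exists d. split. exact Hd. intros s _ Hs. simpl. split.
    + destruct (Req_dec s t) as [->|Hne].
      * replace (F' t - F' t) with 0 by ring. rewrite Rabs_R0; exact Heps.
      * apply (Hd2 s). split. split. exact I. auto. exact Hs.
    + replace (0 - 0) with 0 by ring. rewrite Rabs_R0; exact Heps.
Qed.
Definition clamp (x : R) : R := Rmax (-1) (Rmin 1 x).
Lemma clamp_I11 x : I11 (clamp x).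
Proof. unfold clamp, I11, Rmax, Rmin. repeat destruct Rle_dec; lra. Qed.
Lemma clamp_id x : I11 x -> clamp x = x.
Proof. unfold clamp, I11, Rmax, Rmin. intros. repeat destruct Rle_dec; lra. Qed.
Lemma clamp_lip x y : Rabs (clamp x - clamp y) <= Rabs (x - y).
Proof. unfold clamp, Rmax, Rmin. repeat destruct Rle_dec; unfold Rabs; repeat destruct Rcase_abs; lra.
Qed.

Lemma cont_clamp (h : R -> R) :
  (forall t, I11 t -> forall eps, 0 < eps -> exists d, 0 < d /\
     forall s, I11 s -> Rabs (s - t) < d -> Rabs (h s - h t) < eps) ->
  forall c, continuity_pt (fun x => h (clamp x)) c.
Proof.
  intros H c eps Heps.
  destruct (H (clamp c) (clamp_I11 c) eps Heps) as [d [Hd Hd2]].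
  exists d. split. exact Hd. intros x [_ Hx]. simpl in *. unfold R_dist in *.
  apply Hd2. apply clamp_I11. eapply Rle_lt_trans. apply clamp_lip. exact Hx.
Qed.

Definition DQ (g dg : R -> R) := forall t, I11 t -> forall eps, 0 < eps -> exists d, 0 < d /\
  forall s, I11 s -> s <> t -> Rabs (s - t) < d -> Rabs ((g s - g t) / (s - t) - dg t) < eps.

Lemma DQ_cont g dg : DQ g dg -> forall t, I11 t -> forall eps, 0 < eps -> exists d, 0 < d /\
     forall s, I11 s -> Rabs (s - t) < d -> Rabs (g s - g t) < eps.
Proof.
  intros H t Ht eps Heps.
  destruct (H t Ht 1 Rlt_0_1) as [d [Hd Hd2]].
  set (K := Rabs (dg t) + 1).
  assert (HK : 0 < K) by (unfold K; pose proof (Rabs_pos (dg t)); lra).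
  exists (Rmin d (eps / K)). split. apply Rmin_glb_lt; auto. apply Rdiv_lt_0_compat; auto.
  intros s Hs Hst.
  destruct (Req_dec s t) as [->|Hne]. replace (g t - g t) with 0 by ring. rewrite Rabs_R0. auto.
  assert (Hst1 : Rabs (s - t) < d) by (eapply Rlt_le_trans; [exact Hst| apply Rmin_l]).
  assert (Hst2 : Rabs (s - t) < eps / K) by (eapply Rlt_le_trans; [exact Hst| apply Rmin_r]).
  specialize (Hd2 s Hs Hne Hst1).
  assert (Hq : Rabs ((g s - g t) / (s - t)) <= K).
  { unfold K. replace ((g s - g t) / (s - t)) with (((g s - g t) / (s - t) - dg t) + dg t) by ring.
    eapply Rle_trans. apply Rabs_triang. lra. }
  replace (g s - g t) with ((g s - g t) / (s - t) * (s - t)) by (field; lra).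
  rewrite Rabs_mult.
  assert (0 < Rabs (s - t)) by (apply Rabs_pos_lt; lra).
  apply Rle_lt_trans with (K * Rabs (s - t)).
  apply Rmult_le_compat_r; lra.
  apply Rmult_lt_reg_r with (/K). apply Rinv_0_lt_compat; auto.
  replace (K * Rabs (s - t) * / K) with (Rabs (s - t)) by (field; lra). exact Hst2.
Qed.

Lemma DQ_derive g dg x : DQ g dg -> -1 < x < 1 -> is_derive (fun y => g (clamp y)) x (dg x).
Proof.
  intros H Hx. apply is_derive_Reals. intros eps Heps.
  assert (Hx' : I11 x) by (unfold I11; lra).
  destruct (H x Hx' eps Heps) as [d [Hd Hd2]].
  assert (Hm : 0 < Rmin d (Rmin (1 - x) (x + 1))) by (repeat apply Rmin_glb_lt; lra).
  exists (mkposreal _ Hm). intros h Hh Hhd. simpl in Hhd.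
  assert (Hh1 : Rabs h < d) by (eapply Rlt_le_trans; [exact Hhd| apply Rmin_l]).
  assert (Hh2 : Rabs h < Rmin (1 - x) (x + 1)) by (eapply Rlt_le_trans; [exact Hhd| apply Rmin_r]).
  assert (Hh3 : Rabs h < 1 - x) by (eapply Rlt_le_trans; [exact Hh2| apply Rmin_l]).
  assert (Hh4 : Rabs h < x + 1) by (eapply Rlt_le_trans; [exact Hh2| apply Rmin_r]).
  apply Rabs_def2 in Hh3. apply Rabs_def2 in Hh4.
  assert (HI : I11 (x + h)) by (unfold I11; lra).
  rewrite (clamp_id (x + h) HI), (clamp_id x Hx').
  specialize (Hd2 (x + h) HI). replace (x + h - x) with h in Hd2 by ring.
  apply Hd2; auto. intro Habs. apply Hh. lra.
Qed.

Lemma DQ_lip g dg K a b : DQ g dg -> (forall x, I11 x -> Rabs (dg x) <= K) -> I11 a -> I11 b ->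
  Rabs (g b - g a) <= K * Rabs (b - a).
Proof.
  intros H HK Ha Hb.
  destruct (MVT_gen (fun y => g (clamp y)) a b dg) as [c [Hc Heq]].
  - intros x Hx. apply DQ_derive; auto. unfold I11 in *.
    destruct Hx as [Hx1 Hx2].
    split. eapply Rle_lt_trans; [|exact Hx1]. apply Rmin_glb; lra.
    eapply Rlt_le_trans; [exact Hx2|]. apply Rmax_lub; lra.
  - intros x Hx. apply cont_clamp. apply DQ_cont with dg. exact H.
  - simpl in Heq. rewrite (clamp_id a Ha), (clamp_id b Hb) in Heq. rewrite Heq.
    rewrite Rabs_mult. apply Rmult_le_compat_r. apply Rabs_pos. apply HK.
    unfold I11 in *. destruct Hc as [Hc1 Hc2]. split.
    eapply Rle_trans; [|exact Hc1]. apply Rmin_glb; lra.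
    eapply Rle_trans; [exact Hc2|]. apply Rmax_lub; lra.
Qed.
Lemma sup_ge (g : R -> C) m t : (forall x, I11 x -> Cmod (g x) <= m) -> I11 t ->
  Cmod (g t) <= supnormC g.
Proof.
  intros Hm Ht. unfold supnormC.
  destruct (Lub_Rbar_correct (fun r => exists t, I11 t /\ r = Cmod (g t))) as [Hub Hl].
  assert (H1 := Hub (Cmod (g t)) (ex_intro _ t (conj Ht eq_refl))).
  assert (H2 : Rbar_le (Lub_Rbar (fun r => exists t, I11 t /\ r = Cmod (g t))) m).
  { apply Hl. intros x [y [Hy ->]]. simpl. apply Hm; auto. }
  destruct (Lub_Rbar _); simpl in *; try easy.
Qed.

Lemma sup_le (g : R -> C) b : (forall x, I11 x -> Cmod (g x) <= b) ->
  supnormC g <= b.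
Proof.
  intros Hm. unfold supnormC.
  destruct (Lub_Rbar_correct (fun r => exists t, I11 t /\ r = Cmod (g t))) as [Hub Hl].
  assert (H0 : I11 0) by (unfold I11; lra).
  assert (H1 := Hub (Cmod (g 0)) (ex_intro _ 0 (conj H0 eq_refl))).
  assert (H2 : Rbar_le (Lub_Rbar (fun r => exists t, I11 t /\ r = Cmod (g t))) b).
  { apply Hl. intros x [y [Hy ->]]. simpl. apply Hm; auto. }
  destruct (Lub_Rbar _); simpl in *; try easy.
Qed.

Lemma sup_ge0 (g : R -> C) m : (forall x, I11 x -> Cmod (g x) <= m) -> 0 <= supnormC g.
Proof.
  intros Hm. apply Rle_trans with (Cmod (g 0)). apply Cmod_ge_0.
  apply (sup_ge g m); auto. unfold I11; lra.
Qed.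
Lemma poly_id s t : s * s = 7 ->
  (14 * s - 20) / 27 - (2*t - t*t - t*t*t) = (t - (s-1)/3)^2 * (t + 1 + 2*((s-1)/3)).
Proof. intros H.
  transitivity ((t - (s-1)/3)^2 * (t + 1 + 2*((s-1)/3)) - (s*s-7)*(-t/3 + (2*s-3)/27)).
  field. rewrite H. ring.
Qed.

Lemma core s L t Y0 Y2 V : s*s = 7 -> 0 <= s -> 0 <= L -> 0 <= t <= 1 ->
  -L <= Y0 <= L -> -L <= Y2 <= L -> V <= Y0 + L*(1-t) -> V <= L*t ->
  V - t*(t+1)/2*Y0 - t*(t-1)/2*Y2 <= (14*s-20)/27 * L.
Proof.
  intros Hs Hs0 HL Ht HY0 HY2 HV1 HV2.
  set (A := t*(t+1)/2). set (B := t*(1-t)/2).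
  assert (HA : 0 <= A <= 1) by (unfold A; nra).
  assert (HB : 0 <= B) by (unfold B; nra).
  assert (E1 : - (t*(t-1)/2*Y2) <= B*L).
  { replace (- (t*(t-1)/2*Y2)) with (B*Y2) by (unfold B; field). apply Rmult_le_compat_l; lra. }
  assert (E2 : (1-A)*V <= (1-A)*(L*t)) by (apply Rmult_le_compat_l; lra).
  assert (E3 : A*(V - Y0) <= A*(L*(1-t))) by (apply Rmult_le_compat_l; lra).
  assert (E4 : 0 <= (t - (s-1)/3)^2 * (t + 1 + 2*((s-1)/3))).
  { apply Rmult_le_pos. apply pow2_ge_0. lra. }
  rewrite <- poly_id in E4 by auto.
  assert (E5 : 0 <= L * ((14 * s - 20) / 27 - (2*t - t*t - t*t*t))) by (apply Rmult_le_pos; lra).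
  assert (E6 : (1-A)*(L*t) + A*(L*(1-t)) + B*L = L*(2*t - t*t - t*t*t)) by (unfold A, B; field).
  nra.
Qed.
Lemma core_neg s L t Y0 Y2 V : s*s = 7 -> 0 <= s -> 0 <= L -> -1 <= t <= 0 ->
  -L <= Y0 <= L -> -L <= Y2 <= L -> V <= Y2 + L*(1+t) -> V <= L*(-t) ->
  V - t*(t+1)/2*Y0 - t*(t-1)/2*Y2 <= (14*s-20)/27 * L.
Proof.
  intros. replace (V - t*(t+1)/2*Y0 - t*(t-1)/2*Y2) with
    (V - (-t)*(-t+1)/2*Y2 - (-t)*(-t-1)/2*Y0) by field.
  apply core; auto; lra.
Qed.

Lemma core_a s L t Y0 Y2 V : s*s = 7 -> 0 <= s -> 0 <= L -> 0 <= t <= 1 ->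
  -L <= Y0 <= L -> -L <= Y2 <= L -> V <= Y0 + L*(1-t) -> V <= L*t ->
  V - (t*(t+1)/2*Y0 + (1-t*t)*0 + t*(t-1)/2*Y2) <= (14*s-20)/27 * L.
Proof. intros. replace (V - (t*(t+1)/2*Y0 + (1-t*t)*0 + t*(t-1)/2*Y2)) with
  (V - t*(t+1)/2*Y0 - t*(t-1)/2*Y2) by ring. apply core; auto. Qed.
Lemma core_neg_a s L t Y0 Y2 V : s*s = 7 -> 0 <= s -> 0 <= L -> -1 <= t <= 0 ->
  -L <= Y0 <= L -> -L <= Y2 <= L -> V <= Y2 + L*(1+t) -> V <= L*(-t) ->
  V - (t*(t+1)/2*Y0 + (1-t*t)*0 + t*(t-1)/2*Y2) <= (14*s-20)/27 * L.
Proof. intros. replace (V - (t*(t+1)/2*Y0 + (1-t*t)*0 + t*(t-1)/2*Y2)) with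
  (V - t*(t+1)/2*Y0 - t*(t-1)/2*Y2) by ring. apply core_neg; auto. Qed.

Lemma gap2_bound y0 y1 y2 t : Omega2 y0 y1 y2 -> I11 t ->
  gap2 y0 y1 y2 t <= (14 * sqrt 7 - 20) / 27.
Proof.
  intros [H0 [H1 [H2 [H3 H4]]]] Ht. unfold I11 in Ht.
  assert (Hs : sqrt 7 * sqrt 7 = 7) by (apply sqrt_sqrt; lra).
  assert (Hs0 : 0 <= sqrt 7) by apply sqrt_pos.
  rewrite Rabs_R0 in H1. assert (y1 = 0) by (pose proof (Rabs_pos y1); apply Rabs_eq_0; lra). subst y1.
  rewrite Rabs_R1 in H0. replace (Rabs (-1)) with 1 in H2 by (rewrite Rabs_left; lra).
  apply Rabs_le_between in H0. apply Rabs_le_between in H2.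
  replace ((14 * sqrt 7 - 20) / 27) with ((14 * sqrt 7 - 20) / 27 * 1) by ring.
  unfold gap2, phi_up, phi_low, P2r.
  destruct (Rle_dec 0 t) as [Hp|Hn]; apply Rmax_lub.
  - apply core_a; auto; try lra.
    + eapply Rle_trans. apply Rmin_l. eapply Rle_trans. apply Rmin_l.
      rewrite Rabs_left1 by lra. lra.
    + eapply Rle_trans. apply Rmin_r. rewrite Rabs_right by lra. lra.
  - replace (t * (t + 1) / 2 * y0 + (1 - t * t) * 0 + t * (t - 1) / 2 * y2 -
       Rmax (Rmax (y0 - Rabs (t - 1)) (0 - Rabs (t - 0))) (- Rabs t)) with
      (- Rmax (Rmax (y0 - Rabs (t - 1)) (0 - Rabs (t - 0))) (- Rabs t)
       - t*(t+1)/2 * (-y0) - t*(t-1)/2*(-y2)) by ring.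
    apply core; auto; try lra.
    + assert (HH : y0 - Rabs (t-1) <= Rmax (Rmax (y0 - Rabs (t - 1)) (0 - Rabs (t - 0))) (- Rabs t)).
      { eapply Rle_trans. apply Rmax_l. apply Rmax_l. }
      assert (Rabs (t-1) = -(t-1)) by (apply Rabs_left1; lra). lra.
    + assert (HH : - Rabs t <= Rmax (Rmax (y0 - Rabs (t - 1)) (0 - Rabs (t - 0))) (- Rabs t)) by apply Rmax_r.
      assert (Rabs (t - -1) = t - -1) by (apply Rabs_right; lra). assert (Rabs t = t \/ t < 0) by (destruct (Rle_dec 0 t); [left; apply Rabs_right; lra | right; lra]). lra.
  - apply core_neg_a; auto; try lra.
    + eapply Rle_trans. apply Rmin_l. eapply Rle_trans. apply Rmin_r.
      rewrite Rabs_right by lra. lra.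
    + eapply Rle_trans. apply Rmin_r. rewrite Rabs_left by lra. lra.
  - replace (t * (t + 1) / 2 * y0 + (1 - t * t) * 0 + t * (t - 1) / 2 * y2 -
       Rmax (Rmax (0 - Rabs (t - 0)) (y2 - Rabs (t - -1))) (- Rabs t)) with
      (- Rmax (Rmax (0 - Rabs (t - 0)) (y2 - Rabs (t - -1))) (- Rabs t)
       - t*(t+1)/2 * (-y0) - t*(t-1)/2*(-y2)) by ring.
    apply core_neg; auto; try lra.
    + assert (HH : y2 - Rabs (t - -1) <= Rmax (Rmax (0 - Rabs (t - 0)) (y2 - Rabs (t - -1))) (- Rabs t)).
      { eapply Rle_trans. apply Rmax_r. apply Rmax_l. }
      assert (Rabs (t - -1) = t - -1) by (apply Rabs_right; lra). assert (Rabs t = t \/ t < 0) by (destruct (Rle_dec 0 t); [left; apply Rabs_right; lra | right; lra]). lra.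
    + assert (HH : - Rabs t <= Rmax (Rmax (0 - Rabs (t - 0)) (y2 - Rabs (t - -1))) (- Rabs t)) by apply Rmax_r.
      assert (Rabs t = -t) by (apply Rabs_left; lra). lra.
Qed.
Lemma s7_bounds : 2.6 < sqrt 7 < 2.7.
Proof.
  assert (Hs : sqrt 7 * sqrt 7 = 7) by (apply sqrt_sqrt; lra).
  assert (Hs0 : 0 <= sqrt 7) by apply sqrt_pos. split; nra.
Qed.

Lemma gap2_attained : exists y0 y1 y2 t, Omega2 y0 y1 y2 /\ I11 t /\
      gap2 y0 y1 y2 t = (14 * sqrt 7 - 20) / 27.
Proof.
  assert (Hs : sqrt 7 * sqrt 7 = 7) by (apply sqrt_sqrt; lra).
  pose proof s7_bounds.
  set (s := sqrt 7) in *. set (T := (s - 1)/3).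
  assert (HT : 0.53 < T < 0.57) by (unfold T; lra).
  exists (2*T-1), 0, 1, T. split; [|split].
  - unfold Omega2. rewrite Rabs_R0.
    replace (0-1) with (-1) by ring. replace (-1-0) with (-1) by ring.
    replace (Rabs (-1)) with 1 by (rewrite Rabs_left; lra).
    rewrite Rabs_R1. replace (1-0) with 1 by ring. rewrite Rabs_R1.
    replace (0 - (2*T-1)) with (1 - 2*T) by ring.
    repeat split; try (apply Rabs_le; lra); lra.
  - unfold I11; lra.
  - unfold gap2, phi_up, phi_low, P2r.
    destruct (Rle_dec 0 T) as [_|]; [|lra].
    rewrite (Rabs_left1 (T-1)) by lra. rewrite (Rabs_right (T-0)) by lra.
    rewrite (Rabs_right T) by lra.
    replace (Rmin (Rmin (2 * T - 1 + - (T - 1)) (0 + (T - 0))) T) with T.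
    2:{ unfold Rmin; repeat destruct Rle_dec; lra. }
    replace (Rmax (Rmax (2 * T - 1 - - (T - 1)) (0 - (T - 0))) (- T)) with (3*T-2).
    2:{ unfold Rmax; repeat destruct Rle_dec; lra. }
    assert (E : T - (T * (T + 1) / 2 * (2 * T - 1) + (1 - T * T) * 0 + T * (T - 1) / 2 * 1)
      = (14 * s - 20) / 27).
    { unfold T. transitivity ((14 * s - 20) / 27 + (s*s-7)*(-((s-1)/3)/3 + (2*s-3)/27)). field. rewrite Hs. ring. }
    rewrite Rmax_left. exact E. lra.
Qed.
Definition FF (T e x : R) := T - x + sqrt (x^2 + e^2) - sqrt ((x - T)^2 + e^2).
Definition FF' (T e x : R) := -1 + x / sqrt (x^2 + e^2) - (x - T) / sqrt ((x - T)^2 + e^2).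
Lemma FF_der T e x : 0 < e -> is_derive (FF T e) x (FF' T e x).
Proof. intros He. unfold FF, FF'. auto_derive.
  - assert (0 < x * (x * 1) + e * (e * 1)) by nra. assert (0 < (x + - T) * ((x + - T) * 1) + e * (e * 1)) by (pose proof (Rle_0_sqr (x + - T)); unfold Rsqr in *; nra). tauto.
  - replace (x * (x * 1) + e * (e * 1)) with (x^2+e^2) by ring.
    replace ((x + - T) * ((x + - T) * 1) + e * (e * 1)) with ((x-T)^2+e^2) by ring.
    assert (0 < sqrt (x^2+e^2)) by (apply sqrt_lt_R0; pose proof (Rle_0_sqr (x + - T)); pose proof (Rle_0_sqr (x - T)); unfold Rsqr in *; nra).
    assert (0 < sqrt ((x-T)^2+e^2)) by (apply sqrt_lt_R0; pose proof (Rle_0_sqr (x + - T)); pose proof (Rle_0_sqr (x - T)); unfold Rsqr in *; nra).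
    field. lra.
Qed.
Lemma FF'_der T e x : 0 < e -> ex_derive (FF' T e) x.
Proof. intros He. unfold FF'. auto_derive.
  assert (0 < x * (x * 1) + e * (e * 1)) by nra. assert (0 < (x + - T) * ((x + - T) * 1) + e * (e * 1)) by (pose proof (Rle_0_sqr (x + - T)); unfold Rsqr in *; nra).
  assert (0 < sqrt (x * (x * 1) + e * (e * 1))) by (apply sqrt_lt_R0; pose proof (Rle_0_sqr (x + - T)); pose proof (Rle_0_sqr (x - T)); unfold Rsqr in *; nra).
  assert (0 < sqrt ((x + - T) * ((x + - T) * 1) + e * (e * 1))) by (apply sqrt_lt_R0; pose proof (Rle_0_sqr (x + - T)); pose proof (Rle_0_sqr (x - T)); unfold Rsqr in *; nra).
  repeat split; try assumption; lra.
Qed.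
Lemma FF'_cont T e x : 0 < e -> continuity_pt (FF' T e) x.
Proof. intros He. destruct (FF'_der T e x He) as [l Hl]. apply is_derive_Reals in Hl.
  apply derivable_continuous_pt. exists l. exact Hl. Qed.
Lemma Cmod_sq z : Cmod z * Cmod z = fst z ^ 2 + snd z ^ 2.
Proof. unfold Cmod. apply sqrt_sqrt. nra. Qed.

Lemma Cmod_le_sum z : Cmod z <= Rabs (fst z) + Rabs (snd z).
Proof.
  pose proof (Cmod_sq z). pose proof (Cmod_ge_0 z).
  pose proof (Rabs_pos (fst z)). pose proof (Rabs_pos (snd z)).
  assert (Rabs (fst z) * Rabs (fst z) = fst z ^ 2) by (rewrite <- Rabs_mult; simpl; rewrite Rmult_1_r; apply Rabs_right; nra).
  assert (Rabs (snd z) * Rabs (snd z) = snd z ^ 2) by (rewrite <- Rabs_mult; simpl; rewrite Rmult_1_r; apply Rabs_right; nra).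
  nra.
Qed.

Lemma CS a b c d : Rabs (a * c + b * d) <= Cmod (a, b) * Cmod (c, d).
Proof.
  pose proof (Cmod_sq (a,b)). pose proof (Cmod_sq (c,d)). simpl in *.
  pose proof (Cmod_ge_0 (a,b)). pose proof (Cmod_ge_0 (c,d)).
  set (u := Cmod (a,b)) in *. set (v := Cmod (c,d)) in *.
  assert (E : (u*v)^2 = (a^2+b^2)*(c^2+d^2)).
  { replace ((u*v)^2) with ((u*u)*(v*v)) by ring. rewrite H, H0. ring. }
  assert (Hsq : (a*c+b*d)^2 <= (u*v)^2).
  { rewrite E. pose proof (pow2_ge_0 (a*d-b*c)). nra. }
  assert (0 <= u*v) by (apply Rmult_le_pos; auto).
  apply Rabs_le. split; nra.
Qed.

Lemma f'_bounded (f' : R -> C) : continuous_on_I11 f' -> exists m, forall x, I11 x -> Cmod (f' x) <= m.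
Proof.
  intros H.
  assert (E1 : forall t, I11 t -> forall eps, 0 < eps -> exists d, 0 < d /\
     forall s, I11 s -> Rabs (s - t) < d -> Rabs (fst (f' s) - fst (f' t)) < eps).
  { intros t Ht eps Heps. destruct (within_C_eps f' I11 t (f' t) (H t Ht) eps Heps) as [d [Hd Hd2]].
    exists d. split; auto. intros s Hs Hst. apply (Hd2 s Hs Hst). }
  assert (E2 : forall t, I11 t -> forall eps, 0 < eps -> exists d, 0 < d /\
     forall s, I11 s -> Rabs (s - t) < d -> Rabs (snd (f' s) - snd (f' t)) < eps).
  { intros t Ht eps Heps. destruct (within_C_eps f' I11 t (f' t) (H t Ht) eps Heps) as [d [Hd Hd2]].
    exists d. split; auto. intros s Hs Hst. apply (Hd2 s Hs Hst). }
  pose proof (cont_clamp _ E1) as C1. pose proof (cont_clamp _ E2) as C2.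
  set (k := fun x => Rabs (fst (f' (clamp x))) + Rabs (snd (f' (clamp x)))).
  assert (Ck : forall c, -1 <= c <= 1 -> continuity_pt k c).
  { intros c _. unfold k.
    apply (continuity_pt_plus (fun x => Rabs (fst (f' (clamp x)))) (fun x => Rabs (snd (f' (clamp x))))).
    - apply (continuity_pt_comp (fun x => fst (f' (clamp x))) Rabs). apply C1. apply Rcontinuity_abs.
    - apply (continuity_pt_comp (fun x => snd (f' (clamp x))) Rabs). apply C2. apply Rcontinuity_abs. }
  destruct (continuity_ab_maj k (-1) 1 ltac:(lra) Ck) as [Mx [HMx _]].
  exists (k Mx). intros x Hx. eapply Rle_trans. apply Cmod_le_sum.
  specialize (HMx x Hx). unfold k in HMx at 1. rewrite clamp_id in HMx by auto. exact HMx.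
Qed.

Lemma DQ_from_f (f f' : R -> C) w1 w2 : is_deriv_on_I11 f f' ->
  DQ (fun x => w1 * fst (f x) + w2 * snd (f x)) (fun x => w1 * fst (f' x) + w2 * snd (f' x)).
Proof.
  intros H t Ht eps Heps.
  set (W := Rabs w1 + Rabs w2 + 1).
  assert (HW : 0 < W) by (unfold W; pose proof (Rabs_pos w1); pose proof (Rabs_pos w2); lra).
  destruct (within_C_eps _ _ t (f' t) (H t Ht) (eps / W) ltac:(apply Rdiv_lt_0_compat; auto))
    as [d [Hd Hd2]].
  exists d. split; auto. intros s Hs Hne Hst.
  destruct (Hd2 s (conj Hs Hne) Hst) as [H1 H2].
  assert (Hn : s - t <> 0) by lra.
  rewrite Cquot_fst in H1 by auto. rewrite Cquot_snd in H2 by auto.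
  replace ((w1 * fst (f s) + w2 * snd (f s) - (w1 * fst (f t) + w2 * snd (f t))) / (s - t) -
    (w1 * fst (f' t) + w2 * snd (f' t))) with
    (w1 * ((fst (f s) - fst (f t)) / (s - t) - fst (f' t)) + w2 * ((snd (f s) - snd (f t)) / (s - t) - snd (f' t)))
    by (field; auto).
  eapply Rle_lt_trans. apply Rabs_triang. rewrite !Rabs_mult.
  apply Rle_lt_trans with (Rabs w1 * (eps / W) + Rabs w2 * (eps / W)).
  apply Rplus_le_compat; apply Rmult_le_compat_l; try apply Rabs_pos; lra.
  replace (Rabs w1 * (eps / W) + Rabs w2 * (eps / W)) with (eps * ((Rabs w1 + Rabs w2) / W)) by (field; lra).
  rewrite <- (Rmult_1_r eps) at 2. apply Rmult_lt_compat_l; auto.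
  apply Rmult_lt_reg_r with W; auto. unfold Rdiv. rewrite Rmult_assoc, Rinv_l by lra. unfold W; lra.
Qed.

Lemma P2_fst (f : R -> C) t : fst (P2 f t) = P2r (fst (f 1)) (fst (f 0)) (fst (f (-1))) t.
Proof. unfold P2, P2vals, P2r, RtoC. simpl. ring. Qed.
Lemma P2_snd (f : R -> C) t : snd (P2 f t) = P2r (snd (f 1)) (snd (f 0)) (snd (f (-1))) t.
Proof. unfold P2, P2vals, P2r, RtoC. simpl. ring. Qed.

Lemma Cminus_fst (a b : C) : fst (a - b)%C = fst a - fst b.
Proof. destruct a, b. simpl. ring. Qed.
Lemma Cminus_snd (a b : C) : snd (a - b)%C = snd a - snd b.
Proof. destruct a, b. simpl. ring. Qed.

Lemma pointwise_bound (f f' : R -> C) M t : is_deriv_on_I11 f f' ->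
  0 <= M -> (forall x, I11 x -> Cmod (f' x) <= M) -> I11 t ->
  Cmod (f t - P2 f t)%C <= (14 * sqrt 7 - 20) / 27 * M.
Proof.
  intros Hd HM0 HM Ht.
  assert (Hs : sqrt 7 * sqrt 7 = 7) by (apply sqrt_sqrt; lra).
  assert (Hs0 : 0 <= sqrt 7) by apply sqrt_pos.
  pose proof s7_bounds as Hsb.
  set (z := (f t - P2 f t)%C).
  set (w1 := fst z). set (w2 := snd z).
  set (g := fun x => w1 * fst (f x) + w2 * snd (f x)).
  set (dg := fun x => w1 * fst (f' x) + w2 * snd (f' x)).
  set (K := Cmod z * M).
  assert (HK0 : 0 <= K) by (apply Rmult_le_pos; auto; apply Cmod_ge_0).
  assert (HDQ : DQ g dg) by apply DQ_from_f, Hd.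
  assert (Hdg : forall x, I11 x -> Rabs (dg x) <= K).
  { intros x Hx. unfold dg, K. eapply Rle_trans. apply CS.
    replace (w1, w2) with z by (unfold w1, w2; destruct z; reflexivity).
    replace (fst (f' x), snd (f' x)) with (f' x) by (destruct (f' x); reflexivity).
    apply Rmult_le_compat_l. apply Cmod_ge_0. auto. }
  assert (Lip : forall a b, I11 a -> I11 b -> Rabs (g b - g a) <= K * Rabs (b - a))
    by (intros; eapply DQ_lip; eauto).
  assert (I1 : I11 1) by (unfold I11; lra). assert (I0 : I11 0) by (unfold I11; lra).
  assert (Im1 : I11 (-1)) by (unfold I11; lra).
  assert (Key : g t - P2r (g 1) (g 0) (g (-1)) t = Cmod z * Cmod z).
  { rewrite Cmod_sq. unfold g. 
    unfold w1, w2, z. rewrite !Cminus_fst, !Cminus_snd, P2_fst, P2_snd. unfold P2r. ring. }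
  assert (Y0 : Rabs (g 1 - g 0) <= K).
  { eapply Rle_trans. apply Lip; auto. replace (1 - 0) with 1 by ring. rewrite Rabs_R1. lra. }
  assert (Y2 : Rabs (g (-1) - g 0) <= K).
  { eapply Rle_trans. apply Lip; auto. replace (-1 - 0) with (-1) by ring.
    replace (Rabs (-1)) with 1 by (rewrite Rabs_left; lra). lra. }
  apply Rabs_le_between in Y0. apply Rabs_le_between in Y2.
  assert (Main : Cmod z * Cmod z <= (14 * sqrt 7 - 20) / 27 * K).
  { rewrite <- Key.
    replace (g t - P2r (g 1) (g 0) (g (-1)) t) with
      ((g t - g 0) - (t*(t+1)/2*(g 1 - g 0) + (1-t*t)*0 + t*(t-1)/2*(g (-1) - g 0)))
      by (unfold P2r; generalize (g t) (g 0) (g 1) (g (-1)); intros; field).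
    unfold I11 in Ht. destruct (Rle_dec 0 t).
    - apply core_a; auto; try lra.
      + pose proof (Lip 1 t I1 Ht). apply Rabs_le_between in H.
        rewrite (Rabs_left1 (t - 1)) in H by lra. lra.
      + pose proof (Lip 0 t I0 Ht). apply Rabs_le_between in H.
        rewrite (Rabs_right (t - 0)) in H by lra. lra.
    - apply core_neg_a; auto; try lra.
      + pose proof (Lip (-1) t Im1 Ht). apply Rabs_le_between in H.
        rewrite (Rabs_right (t - -1)) in H by lra. lra.
      + pose proof (Lip 0 t I0 Ht). apply Rabs_le_between in H.
        rewrite (Rabs_left (t - 0)) in H by lra. lra. }
  fold z. unfold K in Main. pose proof (Cmod_ge_0 z).
  destruct (Req_dec (Cmod z) 0) as [E|E].
  - rewrite E. apply Rmult_le_pos; lra.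
  - apply Rmult_le_reg_l with (Cmod z). lra. nra.
Qed.

Lemma admissible_c : admissible_sigma ((14 * sqrt 7 - 20) / 27).
Proof.
  intros f f' Hd Hc.
  destruct (f'_bounded f' Hc) as [m Hm].
  apply sup_le. intros t Ht. apply pointwise_bound with f'; auto.
  apply (sup_ge0 f' m Hm).
  intros x Hx. apply (sup_ge f' m); auto.
Qed.
Lemma h_bounds u e : 0 <= e -> Rabs u <= sqrt (u^2 + e^2) <= Rabs u + e.
Proof.
  intros He. split.
  - rewrite <- sqrt_Rsqr_abs. apply sqrt_le_1_alt. unfold Rsqr. nra.
  - rewrite <- (sqrt_Rsqr (Rabs u + e)) by (pose proof (Rabs_pos u); lra).
    apply sqrt_le_1_alt. unfold Rsqr. pose proof (Rabs_pos u).
    assert (Rabs u * Rabs u = u^2) by (rewrite <- Rabs_mult; simpl; rewrite Rmult_1_r; apply Rabs_right; nra).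
    nra.
Qed.

Lemma sq_pos u e : 0 < e -> 0 < sqrt (u^2 + e^2).
Proof. intros. apply sqrt_lt_R0. nra. Qed.

Lemma sq_sq u e : sqrt (u^2 + e^2) * sqrt (u^2 + e^2) = u^2 + e^2.
Proof. apply sqrt_sqrt. nra. Qed.

Lemma ratio_abs u e : 0 < e -> Rabs (u / sqrt (u^2 + e^2)) <= 1.
Proof.
  intros He. pose proof (sq_pos u e He). pose proof (h_bounds u e (Rlt_le _ _ He)).
  unfold Rdiv. rewrite Rabs_mult, Rabs_inv, (Rabs_right (sqrt _)) by lra.
  apply Rmult_le_reg_r with (sqrt (u^2+e^2)); auto.
  rewrite Rmult_assoc, Rinv_l by lra. lra.
Qed.

Lemma ratio_mono u v e : 0 < e -> u <= v -> u / sqrt (u^2 + e^2) <= v / sqrt (v^2 + e^2).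
Proof.
  intros He Huv.
  pose proof (sq_pos u e He) as HA. pose proof (sq_pos v e He) as HB.
  pose proof (sq_sq u e) as EA. pose proof (sq_sq v e) as EB.
  set (A := sqrt (u^2+e^2)) in *. set (B := sqrt (v^2+e^2)) in *.
  assert (Key : u * B <= v * A).
  { destruct (Rle_dec 0 u); destruct (Rle_dec 0 v).
    - assert (S : (u*B)^2 <= (v*A)^2).
      { replace ((u*B)^2) with (u^2*(B*B)) by ring. replace ((v*A)^2) with (v^2*(A*A)) by ring.
        rewrite EA, EB. assert (u^2 <= v^2) by nra.
        assert (u^2 * e^2 <= v^2 * e^2) by (apply Rmult_le_compat_r; nra). nra. }
      assert (0 <= u * B) by nra. assert (0 <= v * A) by nra. nra.
    - lra.
    - nra.
    - assert (S : (u*B)^2 >= (v*A)^2).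
      { replace ((u*B)^2) with (u^2*(B*B)) by ring. replace ((v*A)^2) with (v^2*(A*A)) by ring.
        rewrite EA, EB. assert (u^2 >= v^2) by nra.
        assert (u^2 * e^2 >= v^2 * e^2) by (apply Rle_ge, Rmult_le_compat_r; nra). nra. }
      assert (u * B <= 0) by nra. assert (v * A <= 0) by nra. nra. }
  unfold Rdiv. apply Rmult_le_reg_r with (A * B). nra.
  replace (u * / A * (A * B)) with (u * B) by (field; lra).
  replace (v * / B * (A * B)) with (v * A) by (field; lra). exact Key.
Qed.

Lemma FF'_bound T e x : 0 < e -> 0 <= T -> Rabs (FF' T e x) <= 1.
Proof.
  intros He HT. unfold FF'.
  pose proof (ratio_abs x e He). pose proof (ratio_abs (x - T) e He).
  pose proof (ratio_mono (x - T) x e He ltac:(lra)).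
  apply Rabs_le_between in H. apply Rabs_le_between in H0.
  apply Rabs_le. lra.
Qed.

Lemma E_lower e : 0 < e ->
  let T := (sqrt 7 - 1) / 3 in
  (14 * sqrt 7 - 20) / 27 - 4 * e <= FF T e T - P2r (FF T e 1) (FF T e 0) (FF T e (-1)) T.
Proof.
  intros He T.
  assert (Hs : sqrt 7 * sqrt 7 = 7) by (apply sqrt_sqrt; lra).
  pose proof s7_bounds.
  assert (HT : 0.53 < T < 0.57) by (unfold T; lra).
  assert (He' : 0 <= e) by lra.
  unfold FF, P2r.
  pose proof (h_bounds T e He') as B1. rewrite Rabs_right in B1 by lra.
  pose proof (h_bounds (T - T) e He') as B2. replace (T - T) with 0 in B2 |- * by ring. rewrite Rabs_R0 in B2.
  pose proof (h_bounds 1 e He') as B3. rewrite Rabs_R1 in B3.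
  pose proof (h_bounds (1 - T) e He') as B4. rewrite Rabs_right in B4 by lra.
  pose proof (h_bounds 0 e He') as B5. rewrite Rabs_R0 in B5.
  pose proof (h_bounds (0 - T) e He') as B6. rewrite Rabs_left in B6 by lra.
  pose proof (h_bounds (-1) e He') as B7. replace (Rabs (-1)) with 1 in B7 by (rewrite Rabs_left; lra).
  pose proof (h_bounds (-1 - T) e He') as B8. rewrite Rabs_left in B8 by lra.
  set (h1 := sqrt (T^2+e^2)) in *.
  set (h2 := sqrt (0^2+e^2)) in *.
  set (h3 := sqrt (1^2+e^2)) in *.
  set (h4 := sqrt ((1-T)^2+e^2)) in *.
  set (h6 := sqrt ((0-T)^2+e^2)) in *.
  set (h7 := sqrt ((-1)^2+e^2)) in *.
  set (h8 := sqrt ((-1-T)^2+e^2)) in *.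
  set (A := T*(T+1)/2). set (B := T*(1-T)/2).
  assert (HA : 0 <= A <= 1) by (unfold A; nra).
  assert (HB : 0 <= B <= 1) by (unfold B; nra).
  assert (F1 : T - 1 + h3 - h4 <= 2*T - 1 + e) by lra.
  assert (F0 : T - 0 + h2 - h6 <= e) by lra.
  assert (Fm : 1 - e <= T - -1 + h7 - h8) by lra.
  assert (FT : T - e <= T - T + h1 - h2) by lra.
  assert (G1 : A * (T - 1 + h3 - h4) <= A * (2*T - 1 + e)) by (apply Rmult_le_compat_l; lra).
  assert (G0 : (1 - T*T) * (T - 0 + h2 - h6) <= (1 - T*T) * e) by (apply Rmult_le_compat_l; nra).
  assert (Gm : B * (1 - e) <= B * (T - -1 + h7 - h8)) by (apply Rmult_le_compat_l; lra).
  assert (Ec : T - (A * (2*T - 1) + (1 - T*T) * 0 - B * 1) = (14 * sqrt 7 - 20) / 27).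
  { unfold A, B, T. transitivity ((14 * sqrt 7 - 20) / 27 + (sqrt 7 * sqrt 7 - 7)*(-((sqrt 7-1)/3)/3 + (2*sqrt 7-3)/27)). field. rewrite Hs. ring. }
  replace (T * (T - 1) / 2) with (- B) by (unfold B; field).
  fold A.
  assert (1 - T*T <= 1) by nra.
  assert (A * e <= e) by nra. assert (B * e <= e) by nra. assert ((1 - T*T) * e <= e) by nra.
  lra.
Qed.
Lemma Cmod_fst0 (z : C) : snd z = 0 -> Cmod z = Rabs (fst z).
Proof. destruct z as [a b]. simpl. intros ->. apply (Cmod_R a). Qed.

Lemma P2r_bound a b c x m : Rabs a <= m -> Rabs b <= m -> Rabs c <= m -> I11 x ->
  Rabs (P2r a b c x) <= 3 * m.
Proof.
  intros Ha Hb Hc Hx. unfold I11 in Hx. unfold P2r.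
  assert (C1 : Rabs (x * (x + 1) / 2) <= 1) by (apply Rabs_le; nra).
  assert (C2 : Rabs (1 - x * x) <= 1) by (apply Rabs_le; nra).
  assert (C3 : Rabs (x * (x - 1) / 2) <= 1) by (apply Rabs_le; nra).
  eapply Rle_trans. apply Rabs_triang. eapply Rle_trans. apply Rplus_le_compat_r. apply Rabs_triang.
  rewrite !Rabs_mult.
  pose proof (Rabs_pos a). pose proof (Rabs_pos b). pose proof (Rabs_pos c).
  pose proof (Rabs_pos (x * (x + 1) / 2)). pose proof (Rabs_pos (1 - x*x)). pose proof (Rabs_pos (x * (x - 1) / 2)).
  assert (Rabs (x * (x + 1) / 2) * Rabs a <= m) by (apply Rle_trans with (1 * Rabs a); [apply Rmult_le_compat_r|]; lra).
  assert (Rabs (1 - x*x) * Rabs b <= m) by (apply Rle_trans with (1 * Rabs b); [apply Rmult_le_compat_r|]; lra).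
  assert (Rabs (x * (x - 1) / 2) * Rabs c <= m) by (apply Rle_trans with (1 * Rabs c); [apply Rmult_le_compat_r|]; lra).
  lra.
Qed.

Lemma FF_bound T e y : 0 <= T <= 1 -> 0 <= e -> I11 y -> Rabs (FF T e y) <= 5 + 2 * e.
Proof.
  intros HT He Hy. unfold I11 in Hy. unfold FF.
  pose proof (h_bounds y e He). pose proof (h_bounds (y - T) e He).
  assert (Rabs y <= 1) by (apply Rabs_le; lra). assert (Rabs (y - T) <= 2) by (apply Rabs_le; lra).
  pose proof (Rabs_pos y). pose proof (Rabs_pos (y-T)).
  apply Rabs_le. lra.
Qed.

Lemma minimal : forall sigma, admissible_sigma sigma -> (14 * sqrt 7 - 20) / 27 <= sigma.
Proof.
  intros sigma Hadm.
  assert (Hs : sqrt 7 * sqrt 7 = 7) by (apply sqrt_sqrt; lra).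
  pose proof s7_bounds.
  set (c := (14 * sqrt 7 - 20) / 27) in *.
  assert (Hc : 0.4 < c) by (unfold c; lra).
  destruct (Rle_dec c sigma) as [|Hlt]; auto. exfalso.
  set (m := Rmax sigma 0).
  assert (Hm : m < c) by (unfold m, Rmax; destruct Rle_dec; lra).
  assert (Hm0 : 0 <= m) by (unfold m; apply Rmax_r).
  set (e := (c - m) / 8). assert (He : 0 < e) by (unfold e; lra).
  set (T := (sqrt 7 - 1) / 3). assert (HT : 0.53 < T < 0.57) by (unfold T; lra).
  set (f := fun x => RtoC (FF T e x)). set (f' := fun x => RtoC (FF' T e x)).
  destruct (real_C1 (FF T e) (FF' T e) (fun x => FF_der T e x He) (fun x => FF'_cont T e x He)) as [Hd Hcont].
  specialize (Hadm f f' Hd Hcont).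
  assert (Bf' : forall x, I11 x -> Cmod (f' x) <= 1).
  { intros x _. unfold f'. rewrite Cmod_R. apply FF'_bound; lra. }
  assert (S1 : supnormC f' <= 1) by (apply sup_le; auto).
  assert (S0 : 0 <= supnormC f') by (apply (sup_ge0 f' 1); auto).
  assert (Hsig : sigma * supnormC f' <= m).
  { unfold m, Rmax. destruct Rle_dec; nra. }
  assert (Fst : forall x, fst (f x - P2 f x)%C = FF T e x - P2r (FF T e 1) (FF T e 0) (FF T e (-1)) x).
  { intros x. rewrite Cminus_fst, P2_fst. reflexivity. }
  assert (Snd : forall x, snd (f x - P2 f x)%C = 0).
  { intros x. rewrite Cminus_snd, P2_snd. simpl. unfold P2r. ring. }
  set (Bd := 5 + 2 * e).
  assert (Crude : forall x, I11 x -> Cmod (f x - P2 f x)%C <= Bd + 3 * Bd).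
  { intros x Hx. rewrite Cmod_fst0 by apply Snd. rewrite Fst.
    assert (I1 : I11 1) by (unfold I11; lra). assert (I0 : I11 0) by (unfold I11; lra).
    assert (Im1 : I11 (-1)) by (unfold I11; lra).
    unfold Rminus at 1. eapply Rle_trans. apply Rabs_triang. rewrite Rabs_Ropp.
    apply Rplus_le_compat. apply FF_bound; auto; lra.
    apply P2r_bound; auto; apply FF_bound; auto; lra. }
  assert (HT' : I11 T) by (unfold I11; lra).
  pose proof (sup_ge (fun t => (f t - P2 f t)%C) _ T Crude HT') as HG. simpl in HG.
  rewrite Cmod_fst0 in HG by apply Snd. rewrite Fst in HG.
  pose proof (E_lower e He) as EL. simpl in EL. fold T in EL. fold c in EL.
  pose proof (Rle_abs (FF T e T - P2r (FF T e 1) (FF T e 0) (FF T e (-1)) T)).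
  assert (c - 4 * e = (c + m) / 2) by (unfold e; field). lra.
Qed.

Theorem theoremB5 :
  (* sigma_{2,0} = (14 sqrt 7 - 20)/27 is the smallest admissible constant *)
  (admissible_sigma ((14 * sqrt 7 - 20) / 27) /\
   (forall sigma, admissible_sigma sigma -> (14 * sqrt 7 - 20) / 27 <= sigma)) /\
  (* equivalently, the max over t in [-1,1], y in Omega_2 equals that value *)
  ((forall y0 y1 y2 t, Omega2 y0 y1 y2 -> I11 t ->
      gap2 y0 y1 y2 t <= (14 * sqrt 7 - 20) / 27) /\
   (exists y0 y1 y2 t, Omega2 y0 y1 y2 /\ I11 t /\
      gap2 y0 y1 y2 t = (14 * sqrt 7 - 20) / 27)).
Proof.
  split; split.
  - exact admissible_c.
  - exact minimal.
  - exact gap2_bound.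
  - exact gap2_attained.
Qed.
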